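(* Let $\mathcal{C}_{\mathbf{P}\boldsymbol{G}_N}(\mathcal{A})$ be an upper polynomial polar code and let $f$ be the monomial with $\operatorname{ev}(f)=\boldsymbol{G}_N[i]$ for some $i\in[0,2^m-1]$. Then for all $j>i$, $\operatorname{ev}(\check{f})\cdot (\mathbf{P}\boldsymbol{G}_N)[j]=0$.
   Context: Let $m\ge1$, $N=2^m$, $\mathbf{R}_m=\mathbb{F}_2[x_0,\dots,x_{m-1}]/(x_0^2-x_0,\dots,x_{m-1}^2-x_{m-1})$, and $\operatorname{ev}(Q)$ the evaluation vector of $Q\in\mathbf{R}_m$ at all points of $\mathbb{F}_2^m$. Let $\boldsymbol{G}_N=\begin{pmatrix}1&0\\1&1\end{pmatrix}^{\otimes m}$; row $i$ of $\boldsymbol{G}_N$, denoted $\boldsymbol{G}_N[i]$, is $\operatorname{ev}$ of the monomial $x_0^{b_0}\cdots x_{m-1}^{b_{m-1}}$ with $(b_0,\dots,b_{m-1})$ the binary expansion of $2^m-1-i$. An upper polynomial polar code $\mathcal{C}_{\mathbf{P}\boldsymbol{G}_N}(\mathcal{A})$ is the code spanned by the rows of $\mathbf{P}\boldsymbol{G}_N$ indexed by $\mathcal{A}\subseteq[0,N-1]$, where $\mathbf{P}\in\mathbb{F}_2^{N\times N}$ is upper triangular with ones on the diagonal. For a monomial $f$, $\check{f}=x_0\cdots x_{m-1}/f$ is its multiplicative complement. The dot denotes the scalar product over $\mathbb{F}_2$. *)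

(* Defs.v *)
From HB Require Import structures.
From mathcomp Require Import all_boot all_order all_algebra.
From mathcomp Require Import mxtens.
Set Implicit Arguments. Unset Strict Implicit. Unset Printing Implicit Defensive.
Import GRing.Theory.
Local Open Scope ring_scope.

Definition G2 : 'M['F_2]_2 := \matrix_(i < 2, j < 2) ((j <= i)%N)%:R.

Definition GN (m : nat) : 'M['F_2]_(2 ^ m) := ntensmx G2 m.

Definition bit (n l : nat) : bool := odd (n %/ 2 ^ l).

(* A monomial of R_m = F_2[x_0..x_{m-1}]/(x_l^2 - x_l) is x^S = prod_{l in S} x_l,
   represented by its support S : {set 'I_m}. *)
Definition monomial (m : nat) := {set 'I_m}.

(* The evaluation points of F_2^m are indexed by p in [0, 2^m - 1]: the point
   with index p is the binary expansion of 2^m - 1 - p, i.e. coordinate l is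
   1 - bit l p.  This is the ordering for which G_N[i] = ev(monomial with
   exponent vector the binary expansion of 2^m - 1 - i). *)
Definition point (m : nat) (p : 'I_(2 ^ m)) (l : 'I_m) : 'F_2 := (~~ bit p l)%:R.

Definition ev (m : nat) (f : monomial m) : 'rV['F_2]_(2 ^ m) :=
  \row_(p < 2 ^ m) \prod_(l in f) point p l.

(* Multiplicative complement  x_0...x_{m-1} / f. *)
Definition mcompl (m : nat) (f : monomial m) : monomial m := ~: f.

Definition dotF2 (n : nat) (u v : 'rV['F_2]_n) : 'F_2 := \sum_(k < n) u 0 k * v 0 k.

Definition upper_unitri (n : nat) (P : 'M['F_2]_n) : Prop :=
  (forall i j : 'I_n, (j < i)%N -> P i j = 0) /\ (forall i : 'I_n, P i i = 1).

Definition polar_code (m : nat) (P : 'M['F_2]_(2 ^ m)) (A : {set 'I_(2 ^ m)}) :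
  {vspace 'rV['F_2]_(2 ^ m)} := <<[seq row i (P *m GN m) | i in A]>>%VS.

(* Main.v *)
Require Import Defs.
From HB Require Import structures.
From mathcomp Require Import all_boot all_order all_algebra.
From mathcomp Require Import mxtens.
Set Implicit Arguments. Unset Strict Implicit. Unset Printing Implicit Defensive.
Import GRing.Theory.
Local Open Scope ring_scope.

Lemma bitS n l : bit n l.+1 = bit n./2 l.
Proof. by rewrite /bit expnS divnMA divn2. Qed.

Lemma bit0 n : bit n 0 = odd n.
Proof. by rewrite /bit expn0 divn1. Qed.

Lemma bit_mod n k l : (l < k)%N -> bit (n %% 2 ^ k) l = bit n l.
Proof.
move=> lk; rewrite /bit {2}(divn_eq n (2 ^ k)).
have -> : (n %/ 2 ^ k * 2 ^ k = (n %/ 2 ^ k * 2 ^ (k - l)) * 2 ^ l)%N.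
  by rewrite -mulnA -expnD subnK // ltnW.
rewrite divnMDl ?expn_gt0 // oddD oddM oddX /=.
by rewrite subn_eq0 leqNgt lk /= andbF.
Qed.

Lemma bit_div n k l : bit (n %/ 2 ^ k) l = bit n (k + l).
Proof. by rewrite /bit -divnMA -expnD. Qed.

Lemma bit_big n k l : (n < 2 ^ k)%N -> (k <= l)%N -> bit n l = false.
Proof.
move=> nk kl; rewrite /bit divn_small //.
by apply: leq_trans nk _; rewrite leq_exp2l.
Qed.

Lemma topbit x y k : (x < 2 * 2 ^ k)%N -> (y < 2 * 2 ^ k)%N ->
  (y %/ 2 ^ k <= x %/ 2 ^ k)%N = (bit y k ==> bit x k).
Proof.
move=> hx hy; rewrite /bit.
have : (x %/ 2 ^ k < 2)%N by rewrite ltn_divLR ?expn_gt0 // mulnC.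
have : (y %/ 2 ^ k < 2)%N by rewrite ltn_divLR ?expn_gt0 // mulnC.
by case: (y %/ _)%N => [|[|]]; case: (x %/ _)%N => [|[|]].
Qed.

Definition subb m (p i : nat) := all (fun l => bit p l ==> bit i l) (iota 0 m).

Lemma GNE m (i p : 'I_(2 ^ m)) : GN m i p = (subb m p i)%:R.
Proof.
elim: m i p => [|[|m] IH] i p.
- rewrite /GN /subb /= mxE.
  by case: i => [[|i] Hi] //; case: p => [[|p] Hp].
- rewrite /GN /subb /= mxE bit0 bit0.
  by case: i => [[|[|i]] Hi] //; case: p => [[|[|p]] Hp].
- rewrite /GN /= mxE.
  have := IH (Ordinal (mxtens_index_proof2 i)) (Ordinal (mxtens_index_proof2 p)).
  rewrite /GN /= => ->.
  rewrite mxE -natrM mulnb /subb.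
  rewrite (_ : iota 0 m.+2 = iota 0 m.+1 ++ [:: m.+1]); last by rewrite -(addn1 m.+1) iotaD.
  rewrite all_cat all_seq1 andbC.
  congr (_ && _)%:R.
  + apply: eq_in_all => l; rewrite mem_iota add0n => /andP[_ lm].
    by congr (_ ==> _); exact: (bit_mod _ lm).
  + exact: (topbit (k:=m.+1) (ltn_ord i) (ltn_ord p)).
Qed.

Definition toset m (p : 'I_(2 ^ m)) : {set 'I_m} := [set l : 'I_m | bit p l].

Lemma half_lt m p : (p < 2 ^ m.+1)%N -> (p./2 < 2 ^ m)%N.
Proof. by move=> h; rewrite -divn2 ltn_divLR // -expnSr. Qed.

Lemma bits_inj m p q : (p < 2 ^ m)%N -> (q < 2 ^ m)%N ->
  (forall l, (l < m)%N -> bit p l = bit q l) -> p = q.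
Proof.
elim: m p q => [|m IH] p q hp hq H.
- rewrite expn0 in hp hq; by case: p q hp hq H => [|?] [|?].
- rewrite -(odd_double_half p) -(odd_double_half q).
  have h0 := H 0%N (ltn0Sn m); rewrite !bit0 in h0; rewrite h0.
  congr (_ + _.*2)%N; apply: IH; try exact: half_lt.
  by move=> l lm; rewrite -!bitS; apply: H.
Qed.

Lemma sub_leq m k i : (k < 2 ^ m)%N -> (i < 2 ^ m)%N ->
  (forall l, (l < m)%N -> bit k l -> bit i l) -> (k <= i)%N.
Proof.
elim: m k i => [|m IH] k i hk hi H.
- rewrite expn0 in hk hi; by case: k i hk hi H => [|?] [|?].
- rewrite -(odd_double_half k) -(odd_double_half i).
  have h0 := H 0%N (ltn0Sn m); rewrite !bit0 in h0.
  apply: leq_add; first by move: h0; case: (odd k); case: (odd i) => // /(_ isT).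
  rewrite leq_double; apply: IH; try exact: half_lt.
  by move=> l lm; rewrite -!bitS; apply: H.
Qed.

Lemma toset_inj m : injective (@toset m).
Proof.
move=> p q E; apply: val_inj; apply: bits_inj (ltn_ord p) (ltn_ord q) _ => l lm.
by have := congr1 (fun S : {set 'I_m} => Ordinal lm \in S) E; rewrite !inE.
Qed.

Lemma toset_bij m : bijective (@toset m).
Proof.
apply: inj_card_bij (@toset_inj m) _.
have -> : #|'I_(2 ^ m)| = #|powerset [set: 'I_m]| by rewrite card_powerset cardsT !card_ord.
by apply: subset_leq_card; apply/subsetP => S _; rewrite powersetE subsetT.
Qed.

Lemma prodb (T : finType) (A : {set T}) (b : T -> bool) :
  \prod_(l in A) ((b l)%:R : 'F_2) = [forall (l | l \in A), b l]%:R.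
Proof.
case: (boolP [forall (l | l \in A), b l]) => [/forall_inP H | /forall_inPn [l lA nb]].
- by rewrite big1 // => l /H ->.
- by rewrite (bigD1 l) //= (negbTE nb) mul0r.
Qed.

Lemma evE m (g : monomial m) p : ev g 0 p = (toset p \subset ~: g)%:R.
Proof.
rewrite mxE /point prodb; congr (_ %:R); congr (nat_of_bool _); apply/forallP/subsetP => H l.
- rewrite !inE => bl; apply/negP => lg; by have := H l; rewrite lg bl.
- apply/implyP => lg; apply/negP => bl; have := H l; rewrite !inE bl lg; by move/(_ isT).
Qed.

Lemma GNE' m (k p : 'I_(2 ^ m)) : GN m k p = (toset p \subset toset k)%:R.
Proof.
rewrite GNE; congr (_ %:R); congr (nat_of_bool _); apply/allP/subsetP => H l.
- rewrite !inE => bl.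
  have hl : (nat_of_ord l \in iota 0 m) by rewrite mem_iota add0n ltn_ord.
  by have /implyP := H _ hl; apply.
- rewrite mem_iota add0n => /andP[_ lm]; apply/implyP => bl.
  by have := H (Ordinal lm); rewrite !inE; apply.
Qed.

Lemma sum_sub m (B : {set 'I_m}) :
  \sum_(p < 2 ^ m) ((toset p \subset B)%:R : 'F_2) = (2 ^ #|B|)%:R.
Proof.
have [g tK gK] := toset_bij m.
rewrite (reindex g) /=; last by apply: onW_bij; exact: (Bijective gK tK).
under eq_bigr do rewrite gK.
rewrite -natr_sum; congr (_ %:R).

rewrite (eq_bigr (fun S : {set 'I_m} => if S \subset B then 1%N else 0%N)); last by move=> S _; case: (S \subset B).
rewrite -big_mkcond sum1_card -card_powerset; apply: eq_card => S.
by rewrite powersetE.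
Qed.

Theorem lemma4 (m : nat) (hm : (0 < m)%N)
  (P : 'M['F_2]_(2 ^ m)) (A : {set 'I_(2 ^ m)}) (hP : upper_unitri P)
  (i : 'I_(2 ^ m)) (f : monomial m) (hf : ev f = row i (GN m)) :
  forall j : 'I_(2 ^ m), (i < j)%N ->
    dotF2 (ev (mcompl f)) (row j (P *m GN m)) = 0.
Proof.
move=> j ij.
have [g tK gK] := toset_bij m.
have key : ~: toset i \subset f.
  apply/subsetP => l; rewrite !inE => nbl; apply: contraT => nlf.
  have := congr1 (fun v : 'rV['F_2]_(2 ^ m) => v 0 (g [set l])) hf.
  rewrite /= evE mxE GNE' gK !sub1set !inE nlf (negbTE nbl) /=.
  by move/eqP; rewrite oner_eq0.
rewrite /dotF2.
rewrite (eq_bigr (fun p => \sum_k P j k * ((toset p \subset f)%:R * GN m k p))); last first.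
  move=> p _; rewrite evE /mcompl setCK !mxE big_distrr; apply: eq_bigr => k _.
  by rewrite mulrCA.
rewrite exchange_big big1 // => k _ /=.
rewrite -big_distrr /=.
case: (ltnP k j) => kj; first by rewrite (hP.1 _ _ kj) mul0r.
under eq_bigr do rewrite GNE' -natrM mulnb -subsetI.
rewrite sum_sub.
have : ~~ (toset k \subset toset i).
  apply/negP => /subsetP H.
  have := sub_leq (ltn_ord k) (ltn_ord i).
  have -> : (k <= i)%N = false by apply/negbTE; rewrite -ltnNge; exact: leq_trans ij kj.
  move=> Hc; suff: false by []; apply: Hc => l lm bk; have := H (Ordinal lm); rewrite !inE; by apply.
case/subsetPn => l lk nli.
have lf : l \in f by apply: (subsetP key); rewrite inE.
have hpos : (0 < #|f :&: toset k|)%N by apply/card_gt0P; exists l; rewrite inE lf lk.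
rewrite -(prednK hpos) expnS natrM.
have -> : (2%:R : 'F_2) = 0 by apply/val_inj.
by rewrite mul0r mulr0.
Qed.
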